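(* Let $f$ be a $C^1$ diffeomorphism of $M=\mathbb{R}^d/\mathbb{Z}^d$ and let $\mathbf{x}\in M^{\mathbb{Z}}$ (not necessarily an orbit). Suppose that for some positive integer $n$ and constant $c_4>0$, for every $k\in\mathbb{Z}$ the operator $\Gamma_{S^k\mathbf{x}}$ is invertible on $X_n$ with $\|\Gamma_{S^k\mathbf{x}}^{-1}\|_n\le c_4$. Then $\Gamma_{\mathbf{x}}$ is invertible on $X_\infty$ and $$\|\Gamma_{\mathbf{x}}^{-1}\|_\infty\le \frac{2c_4d\sqrt d}{1-e^{-1/n}}.$$
   Context: For $\mathbf{x}=(x_k)\in M^{\mathbb{Z}}$, $(\Gamma_{\mathbf{x}}\eta)_k=\eta_k-Df(x_{k-1})\eta_{k-1}$ on sequences $\eta=(\eta_k)_{k\in\mathbb{Z}}$ in $\mathbb{R}^d$ (tangent spaces identified with $\mathbb{R}^d$, $|\cdot|$ Euclidean norm). $S$ is the shift $(S\mathbf{x})_k=x_{k-1}$. $\|\eta\|_n=\sup_k e^{-|k|/n}|\eta_k|$, $X_n=\{\|\eta\|_n<\infty\}$, $X_\infty$ bounded sequences with sup norm; operator norms are denoted by the same symbols. *)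

(* Defs.v *)
From Stdlib Require Import Reals ZArith.
From mathcomp Require Import ssreflect ssrfun ssrbool eqtype ssrnat seq fintype bigop.

Set Implicit Arguments.
Unset Strict Implicit.

Local Open Scope R_scope.

Definition vec (d : nat) := 'I_d -> R.
Definition mat (d : nat) := 'I_d -> 'I_d -> R.

Definition vsum (d : nat) (g : 'I_d -> R) : R := \big[Rplus/0%R]_(i < d) g i.

Definition vnorm (d : nat) (v : vec d) : R := sqrt (vsum (fun i => v i * v i)).

Definition mv (d : nat) (A : mat d) (v : vec d) : vec d :=
  fun i => vsum (fun j => A i j * v j).
Definition vadd (d : nat) (u v : vec d) : vec d := fun i => u i + v i.
Definition vsub (d : nat) (u v : vec d) : vec d := fun i => u i - v i.

Definition has_fderiv (d : nat) (F : vec d -> vec d) (DF : vec d -> mat d) : Prop :=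
  forall x eps, 0 < eps -> exists delta, 0 < delta /\
    forall h : vec d, vnorm h < delta ->
      vnorm (fun i => F (vadd x h) i - F x i - mv (DF x) h i) <= eps * vnorm h.

Definition mat_continuous (d : nat) (DF : vec d -> mat d) : Prop :=
  forall x eps, 0 < eps -> exists delta, 0 < delta /\
    forall y, vnorm (vsub y x) < delta ->
      forall i j, Rabs (DF y i j - DF x i j) < eps.

Definition C1_with_deriv (d : nat) (F : vec d -> vec d) (DF : vec d -> mat d) : Prop :=
  has_fderiv F DF /\ mat_continuous DF.

Definition is_int (r : R) : Prop := exists z : Z, r = IZR z.
Definition int_vec (d : nat) (m : vec d) : Prop := forall i, is_int (m i).

(* F : R^d -> R^d descends to a map of the torus M = R^d / Z^d *)
Definition torus_lift (d : nat) (F : vec d -> vec d) : Prop :=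
  forall x m, int_vec m -> int_vec (vsub (F (vadd x m)) (F x)).

(* F (with Jacobian DF) is a lift of a C^1 diffeomorphism f of M = R^d/Z^d:
   F is C^1, descends to M, and there is a C^1 lift G of the inverse map. *)
Definition C1_torus_diffeo (d : nat) (F : vec d -> vec d) (DF : vec d -> mat d) : Prop :=
  C1_with_deriv F DF /\ torus_lift F /\
  exists (G : vec d -> vec d) (DG : vec d -> mat d),
    C1_with_deriv G DG /\ torus_lift G /\
    (forall x, int_vec (vsub (G (F x)) x)) /\
    (forall x, int_vec (vsub (F (G x)) x)).

(* Sequences indexed by Z; points of M^Z are represented by lifts in R^d
   (Df at a point of M is the Jacobian DF of the lift at any lift). *)
Definition vseq (d : nat) := Z -> vec d.

Definition Gamma (d : nat) (DF : vec d -> mat d) (x : vseq d) (eta : vseq d) : vseq d :=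
  fun k i => eta k i - mv (DF (x (k - 1)%Z)) (eta (k - 1)%Z) i.

(* S^k x, where (S x)_j = x_{j-1}; so (S^k x)_j = x_{j-k}, k in Z *)
Definition shiftk (d : nat) (x : vseq d) (k : Z) : vseq d := fun j => x (j - k)%Z.

(* weights: ||eta||_n = sup_k e^{-|k|/n} |eta_k|, ||eta||_infty = sup_k |eta_k| *)
Definition weight_n (n : nat) (k : Z) : R := exp (- IZR (Z.abs k) / INR n).
Definition weight_inf (k : Z) : R := 1.

Definition norm_le (d : nat) (w : Z -> R) (eta : vseq d) (B : R) : Prop :=
  forall k, w k * vnorm (eta k) <= B.

Definition in_X (d : nat) (w : Z -> R) (eta : vseq d) : Prop :=
  exists B, norm_le w eta B.

Definition invertible_with_bound (d : nat) (w : Z -> R) (T : vseq d -> vseq d) (c : R) : Prop :=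
  (exists C, forall eta B, in_X w eta -> norm_le w eta B -> norm_le w (T eta) (C * B)) /\
  exists Tinv : vseq d -> vseq d,
    (forall xi, in_X w xi -> in_X w (Tinv xi) /\ T (Tinv xi) = xi) /\
    (forall eta, in_X w eta -> Tinv (T eta) = eta) /\
    (forall xi B, in_X w xi -> norm_le w xi B -> norm_le w (Tinv xi) (c * B)).

(* Main.v *)
Require Import Defs.
From Stdlib Require Import Reals ZArith.
From mathcomp Require Import ssreflect ssrfun ssrbool eqtype ssrnat seq fintype bigop.
From Stdlib Require Import Lra Lia FunctionalExtensionality.

Set Implicit Arguments.
Unset Strict Implicit.
Local Open Scope R_scope.

Lemma my_exp_le a b : a <= b -> exp a <= exp b.
Proof. move=> h; case: (Rle_lt_or_eq_dec _ _ h) => [h'|->]; [left; exact: exp_increasing|right; reflexivity]. Qed.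

Lemma vsum_le d (f g : 'I_d -> R) : (forall i, f i <= g i) -> vsum f <= vsum g.
Proof.
move=> h; rewrite /vsum; apply: (big_ind2 (fun a b => a <= b)) => //; first lra.
move=> *; lra.
Qed.

Lemma vsum_nonneg d (f : 'I_d -> R) : (forall i, 0 <= f i) -> 0 <= vsum f.
Proof. move=> h; rewrite /vsum; apply: (big_ind (fun a => 0 <= a)) => //; [lra| move=> *; lra]. Qed.

Lemma vsum_lin d (f g : 'I_d -> R) a b :
  vsum (fun i => a * f i + b * g i) = a * vsum f + b * vsum g.
Proof.
rewrite /vsum; apply: (big_rec3 (fun x y z => x = a * y + b * z)); first ring.
move=> i y1 y2 y3 _ ->; ring.
Qed.

Lemma vsum_ext d (f g : 'I_d -> R) : (forall i, f i = g i) -> vsum f = vsum g.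
Proof. move=> h; rewrite /vsum; apply: eq_bigr => i _; exact: h. Qed.

Lemma vnorm_nonneg d (v : vec d) : 0 <= vnorm v.
Proof. exact: sqrt_pos. Qed.

Lemma vnorm_zero d : vnorm (fun _ : 'I_d => 0) = 0.
Proof.
rewrite /vnorm /vsum.
have -> : \big[Rplus/0]_(i < d) (0 * 0) = 0.
  apply: (big_ind (fun a => a = 0)) => //; move=> *; subst; ring.
exact: sqrt_0.
Qed.

Lemma vnorm_neg d (v : vec d) : vnorm (fun i => 0 - v i) = vnorm v.
Proof. rewrite /vnorm; f_equal; apply: vsum_ext => i; ring. Qed.

Lemma vnorm_sub_le d (u v : vec d) :
  vnorm (fun i => u i - v i) <= 2 * (vnorm u + vnorm v).
Proof.
have hu := vnorm_nonneg u; have hv := vnorm_nonneg v.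
have su : vsum (fun i => u i * u i) = vnorm u ^ 2.
  rewrite /vnorm pow2_sqrt //; apply: vsum_nonneg => i; nra.
have sv : vsum (fun i => v i * v i) = vnorm v ^ 2.
  rewrite /vnorm pow2_sqrt //; apply: vsum_nonneg => i; nra.
rewrite {1}/vnorm -[X in _ <= X]sqrt_pow2; last lra.
apply: sqrt_le_1_alt.
apply: Rle_trans (_ : vsum (fun i => 2 * (u i * u i) + 2 * (v i * v i)) <= _).
  apply: vsum_le => i /=; have := pow2_ge_0 (u i + v i); lra.
rewrite vsum_lin su sv; nra.
Qed.

Lemma vnorm_d0 d (v : vec d) : d = 0%nat -> vnorm v = 0.
Proof. case: d v => [|d'] v h; [rewrite /vnorm /vsum big_ord0; exact: sqrt_0|discriminate]. Qed.

Definition wn (n : nat) := weight_n n.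

Lemma w_pos n k : 0 < weight_n n k.
Proof. exact: exp_pos. Qed.

Lemma w_0 n : weight_n n 0 = 1.
Proof. rewrite /weight_n /= Ropp_0 /Rdiv Rmult_0_l; exact: exp_0. Qed.

Lemma w_le1 n k : (0 < n)%nat -> weight_n n k <= 1.
Proof.
move=> hn; rewrite /weight_n -exp_0; apply: my_exp_le.
have h1 : 0 < INR n by apply: lt_0_INR; apply/ssrnat.ltP.
have h2 : 0 <= IZR (Z.abs k) by apply: IZR_le; lia.
rewrite /Rdiv; have := Rinv_0_lt_compat _ h1; nra.
Qed.

Lemma w_shift n a b : (0 < n)%nat ->
  weight_n n a <= exp (IZR (Z.abs (a - b)) / INR n) * weight_n n b.
Proof.
move=> hn; rewrite /weight_n -exp_plus; apply: my_exp_le.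
have h1 : 0 < INR n by apply: lt_0_INR; apply/ssrnat.ltP.
have h2 : IZR (Z.abs b) <= IZR (Z.abs a) + IZR (Z.abs (a - b)).
  rewrite -plus_IZR; apply: IZR_le; lia.
rewrite /Rdiv; have := Rinv_0_lt_compat _ h1; nra.
Qed.

Lemma B_nonneg d w (eta : vseq d) B : (forall k, 0 <= w k) -> norm_le w eta B -> 0 <= B.
Proof.
move=> hw h; have := h 0%Z; have := hw 0%Z; have := vnorm_nonneg (eta 0%Z); nra.
Qed.

Lemma shiftk0 d (x : vseq d) : shiftk x 0 = x.
Proof. apply: functional_extensionality => j; rewrite /shiftk Z.sub_0_r //. Qed.

Lemma Gamma_shift d DF (x eta : vseq d) k :
  Gamma DF (shiftk x k) (shiftk eta k) = shiftk (Gamma DF x eta) k.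
Proof.
apply: functional_extensionality => j; rewrite /Gamma /shiftk.
by replace (j - 1 - k)%Z with (j - k - 1)%Z by lia.
Qed.

Lemma in_X_shift d n (eta : vseq d) k : (0 < n)%nat ->
  in_X (weight_n n) eta -> in_X (weight_n n) (shiftk eta k).
Proof.
move=> hn [B hB]; exists (exp (IZR (Z.abs k) / INR n) * B) => j.
rewrite /shiftk.
have h := w_shift j (j - k)%Z hn.
replace (j - (j - k))%Z with k in h by lia.
have := hB (j - k)%Z; have := vnorm_nonneg (eta (j - k)%Z).
have := exp_pos (IZR (Z.abs k) / INR n); nra.
Qed.

Definition delta d (m : Z) (v : vec d) : vseq d :=
  fun j => if Z.eq_dec j m then v else (fun _ => 0).

Theorem lemma2p3 (d : nat) (F : vec d -> vec d) (DF : vec d -> mat d)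
  (x : vseq d) (n : nat) (c4 : R) :
  C1_torus_diffeo F DF ->
  (0 < n)%nat ->
  (0 < c4)%R ->
  (forall k : Z, invertible_with_bound (weight_n n) (Gamma DF (shiftk x k)) c4) ->
  invertible_with_bound weight_inf (Gamma DF x)
    (2 * c4 * INR d * sqrt (INR d) / (1 - exp (- 1 / INR n)))%R.
Proof.
move=> _ hn hc4 Hk.
have H0 := Hk 0%Z; rewrite shiftk0 in H0.
case: H0 => [[C0 HC0] [T0 [HT0a [HT0b HT0c]]]].
pose E := exp (IZR (Z.abs (-1)) / INR n).
have hE : 0 < E by apply: exp_pos.
have HDF : forall m v, vnorm (mv (DF (x m)) v) <= Rabs C0 * E * vnorm v.
  move=> m v.
  have hin : norm_le (weight_n n) (delta m v) (weight_n n m * vnorm v).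
    move=> j; rewrite /delta; destruct (Z.eq_dec j m) as [e|ne]; [simpl; rewrite e; lra|simpl].
    rewrite vnorm_zero; have := w_pos n m; have := vnorm_nonneg v; nra.
  have := HC0 _ _ (ex_intro _ _ hin) hin (m + 1)%Z.
  have -> : Gamma DF x (delta m v) (m + 1)%Z = fun i => 0 - mv (DF (x m)) v i.
    rewrite /Gamma /delta; replace (m + 1 - 1)%Z with m by lia.
    destruct (Z.eq_dec (m + 1) m) as [e|ne]; first lia.
    destruct (Z.eq_dec m m) as [e2|ne2]; [reflexivity|contradiction].
  rewrite vnorm_neg => h.
  have hw := w_shift m (m + 1)%Z hn.
  replace (m - (m + 1))%Z with (-1)%Z in hw by lia.
  fold E in hw.
  have hp := w_pos n (m + 1)%Z; have hq := w_pos n m.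
  have hv := vnorm_nonneg v; have hN := vnorm_nonneg (mv (DF (x m)) v).
  have hC := Rle_abs C0; have hC' := Rabs_pos C0.
  apply: (Rmult_le_reg_l (weight_n n (m + 1))) => //.
  apply: Rle_trans h _.
  apply: Rle_trans (_ : Rabs C0 * (weight_n n m * vnorm v) <= _).
    apply: Rmult_le_compat_r => //; nra.
  have : weight_n n m * vnorm v <= E * weight_n n (m + 1) * vnorm v
    by apply: Rmult_le_compat_r.
  nra.
have Hinc : forall (xi : vseq d) (B : R), norm_le weight_inf xi B -> norm_le (weight_n n) xi B.
  move=> xi B h k; have := h k; rewrite /weight_inf.
  have := w_le1 k hn; have := w_pos n k; have := vnorm_nonneg (xi k); nra.
have Hbd : forall (xi : vseq d) (B : R), norm_le weight_inf xi B -> forall k, vnorm (T0 xi k) <= c4 * B.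
  move=> xi B hB k.
  have hxi : in_X (weight_n n) xi by exists B; exact: Hinc.
  have [_ [Ts [Tsa [Tsb Tsc]]]] := Hk (- k)%Z.
  have heta := (HT0a _ hxi).1.
  have e1 := Tsb _ (in_X_shift (- k)%Z hn heta).
  rewrite Gamma_shift (HT0a _ hxi).2 in e1.
  have hs : norm_le (weight_n n) (shiftk xi (- k)) B.
    move=> j; rewrite /shiftk.
    have := hB (j - - k)%Z; rewrite /weight_inf; have := w_le1 j hn; have := w_pos n j; have := vnorm_nonneg (xi (j - - k)%Z); nra.
  have := Tsc _ _ (ex_intro _ _ hs) hs 0%Z.
  rewrite e1 /shiftk w_0; replace (0 - - k)%Z with k by lia; lra.
split.
- exists (2 * (1 + Rabs C0 * E)) => eta B _ hB k.
  rewrite /weight_inf Rmult_1_l.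
  have hb := B_nonneg (fun _ => Rle_0_1) hB.
  have h1 := hB k; have h2 := hB (k - 1)%Z; rewrite /weight_inf Rmult_1_l in h1 h2.
  apply: Rle_trans (vnorm_sub_le _ _) _.
  have h3 := HDF (k - 1)%Z (eta (k - 1)%Z).
  have h4 : 0 <= Rabs C0 * E by apply: Rmult_le_pos; [apply: Rabs_pos|lra].
  have h5 : Rabs C0 * E * vnorm (eta (k - 1)%Z) <= Rabs C0 * E * B
    by apply: Rmult_le_compat_l; [exact: h4|lra].
  lra.
- exists T0; split; [|split].
  + move=> xi [B hB].
    have hxn : in_X (weight_n n) xi by exists B; exact: (Hinc _ _ hB).
    split; last exact: (HT0a _ hxn).2.
    exists (c4 * B) => k; rewrite /weight_inf Rmult_1_l; exact: Hbd.
  + move=> eta [B hB]; apply: HT0b; exists B; exact: (Hinc _ _ hB).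
  + move=> xi B _ hB k; rewrite /weight_inf Rmult_1_l.
    have hb := B_nonneg (fun _ => Rle_0_1) hB.
    case: (Nat.eq_dec d 0) => [hd0|hd].
    * rewrite vnorm_d0 // hd0 /= Rmult_0_r; lra.
    * apply: Rle_trans (Hbd _ _ hB k) _.
      apply: Rmult_le_compat_r => //.
      have hd1 : 1 <= INR d by apply: (le_INR 1); lia.
      have hs : 1 <= sqrt (INR d) by rewrite -sqrt_1; apply: sqrt_le_1_alt.
      have h1 : 0 < INR n by apply: lt_0_INR; apply/ssrnat.ltP.
      have he : exp (-1 / INR n) < 1.
        rewrite -exp_0; apply: exp_increasing.
        rewrite /Rdiv; have := Rinv_0_lt_compat _ h1; nra.
      have he0 := exp_pos (-1 / INR n).
      rewrite /Rdiv; apply: (Rmult_le_reg_r (1 - exp (-1 / INR n))); first lra.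
      rewrite Rmult_assoc Rinv_l; last lra.
      have h6 : 1 <= INR d * sqrt (INR d) by nra.
      have h7 : c4 <= c4 * (INR d * sqrt (INR d)) by nra.
      nra.
Qed.
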